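(* Let $G_1,G_2$ be finite groups written additively, $H$ a subgroup of $G_1$, and $k\ge 2$. If there exist a $(G_1,H,k,1)$-BRDF and a $(G_2,k,1)$-HDM, then there exists a $(G_1\times G_2,H\times G_2,k,1)$-BRDF.
   Context: For a finite additive group $G$ with subgroup $H$, a $(G,H,k,\lambda)$-RDF is a collection of $k$-subsets of $G$ (base blocks) whose differences $x-y$ ($x\neq y$ in a common base block) cover every element of $G\setminus H$ exactly $\lambda$ times and no element of $H$. A $(G,H,k,\lambda)$-BRDF is such an RDF in which all base blocks are disjoint from $H$ and the base blocks together with their negatives $-B=\{-b:b\in B\}$ are pairwise disjoint. For a group $G$ of order $g$, a $(G,k,1)$ difference matrix is a $k\times g$ matrix with entries in $G$ such that, for any two distinct rows, the entrywise difference is a permutation of $G$; it is homogeneous (an HDM) if moreover every row is a permutation of $G$. *)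

(* Defs.v *)
From HB Require Import structures.
From mathcomp Require Import all_boot all_order all_algebra.
Set Implicit Arguments. Unset Strict Implicit. Unset Printing Implicit Defensive.
Import GRing.Theory.
Local Open Scope ring_scope.

Definition is_addsubgroup (G : finZmodType) (H : {set G}) : Prop :=
  0 \in H /\ {in H &, forall x y, x - y \in H}.

Definition diff_count (G : finZmodType) (F : seq {set G}) (g : G) : nat :=
  \sum_(B <- F) #|[set xy in setX B B | (xy.1 != xy.2) && ((xy.1 - xy.2)%R == g)]|.

(* (G,H,k,lambda)-RDF; the base blocks form a list F (a collection, possibly
   with repetitions) *)
Definition is_RDF (G : finZmodType) (H : {set G}) (k lambda : nat)
    (F : seq {set G}) : Prop :=
  (forall B, B \in F -> #|B| = k) /\
  (forall g : G, g \notin H -> diff_count F g = lambda) /\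
  (forall g : G, g \in H -> diff_count F g = 0%N).

Definition negset (G : finZmodType) (B : {set G}) : {set G} := [set - x | x in B].

Definition is_BRDF (G : finZmodType) (H : {set G}) (k lambda : nat)
    (F : seq {set G}) : Prop :=
  is_RDF H k lambda F /\
  (forall B, B \in F -> [disjoint B & H]) /\
  (let L := F ++ [seq negset B | B <- F] in
   forall i j : nat, (i < size L)%N -> (j < size L)%N -> i != j ->
     [disjoint nth set0 L i & nth set0 L j]).

Definition is_DM (G : finZmodType) (k : nat) (M : 'M[G]_(k, #|G|)) : Prop :=
  forall i i' : 'I_k, i != i' -> bijective (fun j : 'I_#|G| => M i j - M i' j).

Definition is_HDM (G : finZmodType) (k : nat) (M : 'M[G]_(k, #|G|)) : Prop :=
  is_DM M /\ forall i : 'I_k, bijective (fun j : 'I_#|G| => M i j).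

(* direct product of finite additive groups: componentwise addition
   (the canonical zmodType on pairs), joined with the finite structure *)
HB.instance Definition _ (G1 G2 : finZmodType) := GRing.Zmodule.on (G1 * G2)%type.

(* Main.v *)
Require Import Defs.
From mathcomp Require Import all_boot all_order all_algebra.
Set Implicit Arguments. Unset Strict Implicit. Unset Printing Implicit Defensive.
Import GRing.Theory.

Lemma count_sumb (T : Type) (a : pred T) (s : seq T) :
  count a s = \sum_(y <- s) (a y : nat).
Proof. by elim: s => [|y s IH]; rewrite ?big_nil ?big_cons //= IH. Qed.

Lemma sumb_card (T : finType) (P : pred T) :
  \sum_(y : T) (P y : nat) = #|[set y | P y]|.
Proof.
rewrite -sum1dep_card [RHS]big_mkcond /=; apply: eq_bigr => y _.
by case: (P y).
Qed.

Lemma disj_countP (T : finType) (L : seq {set T}) :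
  (forall i j : nat, (i < size L)%N -> (j < size L)%N -> i != j ->
     [disjoint nth set0 L i & nth set0 L j]) <->
  (forall x : T, (count (fun A : {set T} => x \in A) L <= 1)%N).
Proof.
elim: L => [|A L IH] /=; first by split=> // _ i j.
split.
- move=> H.
  have HL : forall x : T, (count (fun A : {set T} => x \in A) L <= 1)%N.
    by apply/IH => i j ri rj nij; apply: (H i.+1 j.+1).
  move=> x; case xA: (x \in A) => /=; last exact: HL.
  rewrite add1n ltnS leqn0 eqn0Ngt -has_count; apply/hasPn => B /(nthP set0) [j rj <-].
  by rewrite (disjointFr (H 0%N j.+1 isT rj isT) xA).
- move=> H.
  have HL : forall x : T, (count (fun A : {set T} => x \in A) L <= 1)%N.
    by move=> x; apply: leq_trans (H x); apply: leq_addl.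
  have HA : forall j, (j < size L)%N -> [disjoint A & nth set0 L j].
    move=> j rj; apply/pred0P => x /=; apply/negbTE/negP => /andP [xA xB].
    have := H x; rewrite xA add1n ltnS leqn0 eqn0Ngt -has_count => /hasPn/(_ _ (mem_nth set0 rj)).
    by rewrite xB.
  case=> [|i] [|j] //= ri rj nij.
  + exact: HA.
  + by rewrite disjoint_sym; apply: HA.
  + by apply: (proj2 IH HL).
Qed.
Definition ith (G : finZmodType) (B : {set G}) (i : nat) : G := nth 0%R (enum B) i.

Lemma ith_inj (G : finZmodType) (B : {set G}) k :
  #|B| = k -> injective (fun i : 'I_k => ith B i).
Proof.
move=> hB i j /eqP; rewrite /ith nth_uniq ?enum_uniq -?cardE ?hB //.
by move/eqP/val_inj.
Qed.

Lemma ith_im (G : finZmodType) (B : {set G}) k :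
  #|B| = k -> [set ith B i | i : 'I_k] = B.
Proof.
move=> hB; apply/setP => x; apply/imsetP/idP.
- by move=> [i _ ->]; rewrite /ith -mem_enum mem_nth // -cardE hB.
- move=> xB; have xe : x \in enum B by rewrite mem_enum.
  have hi : (index x (enum B) < k)%N by rewrite -hB cardE index_mem.
  by exists (Ordinal hi) => //; rewrite /ith nth_index.
Qed.

Lemma card_pairs (X T : finType) (f : X -> T) (P : T -> T -> bool) :
  injective f ->
  #|[set xy in setX [set f x | x : X] [set f x | x : X] | P xy.1 xy.2]| =
  #|[set p : X * X | P (f p.1) (f p.2)]|.
Proof.
move=> injf.
have injg : injective (fun p : X * X => (f p.1, f p.2)).
  by move=> [a b] [c d] [/injf -> /injf ->].
rewrite -(card_imset _ injg); apply: eq_card => -[u v].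
apply/idP/imsetP.
- rewrite !inE => /andP [/andP [/imsetP [a _ ea] /imsetP [b _ eb]] hP].
  exists (a, b); last by rewrite /= -ea -eb.
  by rewrite inE /= -ea -eb.
- move=> [[a b] hP e]; move: hP; rewrite inE /= => hP; case: e => -> ->.
  by rewrite !inE /= hP andbT; apply/andP; split; apply/imsetP; [exists a | exists b].
Qed.

Definition cnt (G : finZmodType) (A : {set G}) (g : G) : nat :=
  #|[set xy in setX A A | (xy.1 != xy.2) && ((xy.1 - xy.2)%R == g)]|.

Lemma diff_countE (G : finZmodType) (F : seq {set G}) g :
  diff_count F g = \sum_(B <- F) cnt B g.
Proof. by []. Qed.

Definition blk (G1 G2 : finZmodType) k (M : 'M[G2]_(k, #|G2|)) (B : {set G1})
  (j : 'I_#|G2|) : {set (G1 * G2)%type} := [set (ith B i, M i j) | i : 'I_k].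

Lemma cntB (G : finZmodType) (B : {set G}) k d : #|B| = k ->
  cnt B d = \sum_(p : 'I_k * 'I_k) ((p.1 != p.2) && ((ith B p.1 - ith B p.2)%R == d) : nat).
Proof.
move=> hB.
have := card_pairs (fun x y : G => (x != y) && ((x - y)%R == d)) (ith_inj hB).
rewrite ith_im // /cnt => ->; rewrite -sumb_card; apply: eq_bigr => p _.
by rewrite (inj_eq (ith_inj hB)).
Qed.

Lemma cntblk (G1 G2 : finZmodType) k (M : 'M[G2]_(k, #|G2|)) (B : {set G1}) j d h :
  #|B| = k ->
  cnt (blk M B j) (d, h) = \sum_(p : 'I_k * 'I_k)
    ((p.1 != p.2) && ((ith B p.1 - ith B p.2)%R == d) && ((M p.1 j - M p.2 j)%R == h) : nat).
Proof.
move=> hB.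
have ginj : injective (fun i : 'I_k => (ith B i, M i j)).
  by move=> a b [/(ith_inj hB)].
have := card_pairs (fun x y : (G1 * G2)%type => (x != y) && ((x - y)%R == (d, h))) ginj.
rewrite /cnt /blk => ->; rewrite -sumb_card; apply: eq_bigr => p _.
by rewrite (inj_eq ginj) /= xpair_eqE andbA.
Qed.

Lemma blk_count (G1 G2 : finZmodType) k (M : 'M[G2]_(k, #|G2|)) (B : {set G1}) d h :
  #|B| = k -> is_DM M ->
  \sum_(j < #|G2|) cnt (blk M B j) (d, h) = cnt B d.
Proof.
move=> hB hM.
under eq_bigr => j _ do rewrite (cntblk M j d h hB).
rewrite (cntB d hB) exchange_big /=; apply: eq_bigr => p _.
case Q: ((p.1 != p.2) && ((ith B p.1 - ith B p.2)%R == d)) => /=.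
- move/andP: Q => [np _]; have [g' c1 c2] := hM _ _ np.
  rewrite sumb_card.
  have -> : [set j | (M p.1 j - M p.2 j)%R == h] = [set g' h].
    apply/setP => j; rewrite !inE; apply/eqP/eqP => [<-|->]; first by rewrite c1.
    exact: c2.
  by rewrite cards1.
- by rewrite big1.
Qed.

Lemma mem_negset (G : finZmodType) (A : {set G}) x : (x \in negset A) = (- x \in A)%R.
Proof.
apply/imsetP/idP => [[y yA ->]|xA]; first by rewrite opprK.
by exists (- x)%R; rewrite ?opprK.
Qed.

Lemma blk_fst (G1 G2 : finZmodType) k (M : 'M[G2]_(k, #|G2|)) (B : {set G1}) j x :
  #|B| = k -> x \in blk M B j -> x.1 \in B.
Proof.
move=> hB /imsetP [i _ ->] /=; have := ith_im hB; move/setP/(_ (ith B i)) => <-.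
by apply/imsetP; exists i.
Qed.

Lemma blk_cnt_le (G1 G2 : finZmodType) k (M : 'M[G2]_(k, #|G2|)) (B : {set G1}) x :
  #|B| = k -> (forall i : 'I_k, bijective (fun j : 'I_#|G2| => M i j)) ->
  (\sum_(j < #|G2|) (x \in blk M B j : nat) <= (x.1 \in B))%N.
Proof.
move=> hB hrow.
case xB: (x.1 \in B); last first.
  rewrite leqn0; apply/eqP/big1 => j _.
  by case xb: (x \in blk M B j) => //; rewrite (blk_fst hB xb) in xB.
rewrite sumb_card; apply/card_le1_eqP => j j'; rewrite !inE.
move=> /imsetP [i _ ei] /imsetP [i' _ ei'].
rewrite ei' in ei; case: ei => /(ith_inj hB) eii eM.
have [g c1 c2] := hrow i; apply: (can_inj c1) => /=.
by rewrite -eM eii.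
Qed.

Lemma count_F'_le (G1 G2 : finZmodType) k (M : 'M[G2]_(k, #|G2|)) (F : seq {set G1}) x :
  (forall B, B \in F -> #|B| = k) ->
  (forall i : 'I_k, bijective (fun j : 'I_#|G2| => M i j)) ->
  (count (fun A : {set (G1 * G2)%type} => x \in A)
     [seq blk M B j | B <- F, j <- enum 'I_#|G2|]
   <= count (fun B : {set G1} => x.1 \in B) F)%N.
Proof.
move=> hsz hrow.
rewrite !count_sumb big_allpairs_dep big_seq [X in (_ <= X)%N]big_seq.
apply: leq_sum => B BF; rewrite big_enum /=.
exact: blk_cnt_le (hsz _ BF) hrow.
Qed.

Theorem mainTheorem14 (G1 G2 : finZmodType) (H : {set G1}) (k : nat) :
  is_addsubgroup H -> (2 <= k)%N ->
  (exists F : seq {set G1}, is_BRDF H k 1 F) ->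
  (exists M : 'M[G2]_(k, #|G2|), is_HDM M) ->
  exists F' : seq {set (G1 * G2)%type}, is_BRDF (setX H [set: G2]) k 1 F'.
Proof.
move=> hH hk [F [[hsz [hd1 hd0]] [hdH hL]]] [M [hDM hrow]].
exists [seq blk M B j | B <- F, j <- enum 'I_#|G2|].
have hsum : forall d h, diff_count [seq blk M B j | B <- F, j <- enum 'I_#|G2|] (d, h)
                        = diff_count F d.
  move=> d h; rewrite !diff_countE big_allpairs_dep big_seq [RHS]big_seq.
  apply: eq_bigr => B BF; rewrite big_enum /=.
  exact: blk_count (hsz _ BF) hDM.
split; [split; [|split]|split].
- move=> B' /allpairsP [[B j] [BF _ ->]] /=.
  have ginj : injective (fun i : 'I_k => (ith B i, M i j)).
    by move=> a b [/(ith_inj (hsz _ BF))].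
  by rewrite /blk card_imset // card_ord.
- move=> [d h]; rewrite inE /= in_setT andbT => dH.
  by rewrite hsum hd1.
- move=> [d h]; rewrite inE /= in_setT andbT => dH.
  by rewrite hsum hd0.
- move=> B' /allpairsP [[B j] [BF _ ->]] /=.
  apply/pred0P => x /=; apply/negbTE/negP => /andP [xb].
  rewrite inE => /andP [xH _].
  by rewrite (disjointFr (hdH _ BF) (blk_fst (hsz _ BF) xb)) in xH.
- cbv zeta; apply/disj_countP => x.
  move: hL => /= /disj_countP /(_ x.1); rewrite !count_cat !count_map.
  apply: leq_trans; apply: leq_add; first exact: count_F'_le.
  have e1 : forall s : seq {set (G1 * G2)%type},
     count (preim (@negset _) (fun A : {set (G1 * G2)%type} => x \in A)) s =
     count (fun A : {set (G1 * G2)%type} => (- x)%R \in A) s.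
    by move=> s; apply: eq_count => A /=; rewrite mem_negset.
  have e2 : count (preim (@negset _) (fun A : {set G1} => x.1 \in A)) F =
     count (fun A : {set G1} => (- x)%R.1 \in A) F.
    by apply: eq_count => A /=; rewrite mem_negset.
  rewrite e1 e2; exact: count_F'_le.
Qed.
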